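(* Let $V$ be a finite-dimensional braided vector space of diagonal type over a field $F$ of characteristic zero and $\mathfrak B(V)$ its Nichols algebra. If $\Delta(\mathfrak B(V))$ is not an arithmetic root system (i.e. is infinite), then $\dim\mathfrak L(V)_L=\infty$ and $\dim\mathfrak L(V)_R=\infty$.
   Context: $V$ has basis $x_1<\dots<x_n$, braiding $C(x_i\otimes x_j)=p_{i,j}x_j\otimes x_i$; $\mathfrak B(V)=T(V)/\bigoplus_{m\ge2}\ker S_m$ is $\mathbb Z^n$-graded by $\deg x_i=e_i$. Words are ordered lexicographically; a word $u$ is Lyndon if $|u|=1$ or $u<u_2u_1$ for every factorization $u=u_1u_2$ into nonempty words. A word is standard with respect to $\mathfrak B(V)$ if in $\mathfrak B(V)$ it is not a linear combination of strictly greater words (of the same degree). $\Delta^+(\mathfrak B(V))$ is the set of degrees of words that are both Lyndon and standard (equivalently, degrees of Kharchenko's hard super-letters), $\Delta(\mathfrak B(V))=\Delta^+\cup(-\Delta^+)$; it is an arithmetic root system if it is finite. With $p_{u,v}=\prod p_{i,j}^{a_ib_j}$ for $\deg u=\sum a_ie_i,\deg v=\sum b_je_j$, $\mathfrak L(V)_L$ (resp. $\mathfrak L(V)_R$) is the Lie subalgebra of $\mathfrak B(V)$ generated by $V$ under $[u,v]_L=p_{v,u}uv-p_{u,v}vu$ (resp. $[u,v]_R=p_{u,v}uv-p_{v,u}vu$). *)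

(* Defs.v *)
(* Nichols algebras of diagonal type, modelled inside the
   tensor algebra T(V) (finite formal sums of words), modulo the ideal
   I = (+)_{m>=2} ker S_m. *)
From HB Require Import structures.
From mathcomp Require Import all_boot all_order all_algebra all_fingroup.
Set Implicit Arguments. Unset Strict Implicit. Unset Printing Implicit Defensive.
Import GRing.Theory.
Local Open Scope ring_scope.

Section Nichols.
Variables (F : fieldType) (n : nat) (p : 'I_n -> 'I_n -> F).

(* words in the letters x_1 < ... < x_n (letter i stands for x_(i+1)) *)
Definition word := seq 'I_n.
(* an element of T(V): a finite formal linear combination of words *)
Definition tens := seq (F * word).

Definition coef (u : tens) (w : word) : F :=
  \sum_(t <- u) (if t.2 == w then t.1 else 0).
Definition tzero (u : tens) : Prop := forall w, coef u w = 0.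
Definition tscale (c : F) (u : tens) : tens := [seq (c * t.1, t.2) | t <- u].
Definition tsub (u v : tens) : tens := u ++ tscale (-1) v.
Definition tmul (u v : tens) : tens :=
  [seq (a.1 * b.1, a.2 ++ b.2) | a <- u, b <- v].
Definition tword (w : word) : tens := [:: (1, w)].

(* the lift T_s of s in S_m to the braid group, acting on a word of length m:
   the letter in position a moves to position s a; every pair of letters
   (x_i left of x_j) which gets crossed contributes the factor p_(i,j). *)
Definition permw (w : word) (s : 'S_(size w)) : word :=
  [seq tnth (in_tuple w) ((s^-1)%g j) | j <- enum 'I_(size w)].
Definition braid_coef (w : word) (s : 'S_(size w)) : F :=
  \prod_(a : 'I_(size w))
    \prod_(b : 'I_(size w) | (a < b)%N && (s b < s a)%N)
      p (tnth (in_tuple w) a) (tnth (in_tuple w) b).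
(* quantum symmetrizer S_m = sum_{s in S_m} T_s applied to a word of length m *)
Definition symw (w : word) : tens :=
  [seq (braid_coef s, permw s) | s : 'S_(size w)].
Definition sym (u : tens) : tens := flatten [seq tscale t.1 (symw t.2) | t <- u].
Definition comp (m : nat) (u : tens) : tens := [seq t <- u | size t.2 == m].
(* u lies in the ideal (+)_{m >= 2} ker S_m *)
Definition inI (u : tens) : Prop :=
  forall m, if (m < 2)%N then tzero (comp m u) else tzero (sym (comp m u)).

Definition wdeg (w : word) : {ffun 'I_n -> nat} := [ffun i => count_mem i w].

Fixpoint lexlt (u v : word) : bool :=
  match u, v with
  | [::], [::] => false
  | [::], _ :: _ => true
  | _ :: _, [::] => false
  | a :: u', b :: v' => (a < b)%N || ((a == b) && lexlt u' v')
  end.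

Definition lyndon (w : word) : Prop :=
  w != [::] /\
  (size w = 1%N \/
   forall u1 u2, u1 != [::] -> u2 != [::] -> w = u1 ++ u2 -> lexlt w (u2 ++ u1)).

Definition standard (w : word) : Prop :=
  ~ exists l : seq (F * word),
      all (fun t => lexlt w t.2 && (wdeg t.2 == wdeg w)) l /\
      inI (tsub (tword w) l).

Definition DeltaPlus (d : {ffun 'I_n -> int}) : Prop :=
  exists w, [/\ lyndon w, standard w & d = [ffun i => (wdeg w i)%:Z]].
Definition Delta (d : {ffun 'I_n -> int}) : Prop :=
  DeltaPlus d \/ DeltaPlus [ffun i => - d i].
Definition Delta_finite : Prop :=
  exists s : seq {ffun 'I_n -> int}, forall d, Delta d -> d \in s.

Definition pdeg (d e : {ffun 'I_n -> nat}) : F :=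
  \prod_(i : 'I_n) \prod_(j : 'I_n) p i j ^+ (d i * e j).

(* iterated brackets of generators *)
Inductive btree := BLeaf of 'I_n | BNode of btree & btree.
Fixpoint bdeg (t : btree) : {ffun 'I_n -> nat} :=
  match t with
  | BLeaf i => wdeg [:: i]
  | BNode a b => [ffun i => (bdeg a i + bdeg b i)%N]
  end.
Fixpoint bevalL (t : btree) : tens :=
  match t with
  | BLeaf i => tword [:: i]
  | BNode a b =>
      tsub (tscale (pdeg (bdeg b) (bdeg a)) (tmul (bevalL a) (bevalL b)))
           (tscale (pdeg (bdeg a) (bdeg b)) (tmul (bevalL b) (bevalL a)))
  end.
Fixpoint bevalR (t : btree) : tens :=
  match t with
  | BLeaf i => tword [:: i]
  | BNode a b =>
      tsub (tscale (pdeg (bdeg a) (bdeg b)) (tmul (bevalR a) (bevalR b)))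
           (tscale (pdeg (bdeg b) (bdeg a)) (tmul (bevalR b) (bevalR a)))
  end.

Definition lincomb (ev : btree -> tens) (l : seq (F * btree)) : tens :=
  flatten [seq tscale t.1 (ev t.2) | t <- l].
(* u represents (in B(V)) an element of the Lie subalgebra generated by V,
   i.e. of the span of the iterated brackets of generators *)
Definition inLie (ev : btree -> tens) (u : tens) : Prop :=
  exists l : seq (F * btree), inI (tsub u (lincomb ev l)).
(* the Lie subalgebra is infinite dimensional: it contains N elements
   linearly independent in B(V), for every N *)
Definition lie_infinite_dim (ev : btree -> tens) : Prop :=
  forall N : nat, exists us : 'I_N -> tens,
    (forall k, inLie ev (us k)) /\
    (forall c : 'I_N -> F,
        inI (flatten [seq tscale (c k) (us k) | k <- enum 'I_N]) ->
        forall k, c k = 0).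

End Nichols.

(* Main.v *)
Require Import Defs.
From mathcomp Require Import all_boot all_order all_algebra all_fingroup.
From mathcomp Require Import zify.
From Stdlib Require Import Classical.
Set Implicit Arguments. Unset Strict Implicit. Unset Printing Implicit Defensive.
Import GRing.Theory.

Section Words.
Variable n : nat.
Notation word := (word n).

Lemma lexlt_irr (u : word) : lexlt u u = false.
Proof. by elim: u => //= a u ->; rewrite ltnn andbF. Qed.

Lemma lexlt_trans (u v w : word) : lexlt u v -> lexlt v w -> lexlt u w.
Proof.
elim: u v w => [|a u IH] [|b v] [|c w] //=.
case/orP=> [ab|/andP[/eqP<- uv]]; case/orP=> [bc|/andP[/eqP<- vw]].
- by rewrite (ltn_trans ab bc).
- by rewrite ab.
- by rewrite bc.
- by rewrite (IH _ _ uv vw) eqxx orbT.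
Qed.

Lemma lexlt_asym (u v : word) : lexlt u v -> lexlt v u -> False.
Proof. by move=> h1 h2; have := lexlt_trans h1 h2; rewrite lexlt_irr. Qed.

Lemma lexlt_total (u v : word) : u != v -> lexlt u v || lexlt v u.
Proof.
elim: u v => [|a u IH] [|b v] //=.
case: (eqVneq a b) => [<-|ab].
  by rewrite eqseq_cons eqxx ltnn /= => /IH.
move=> _; case: (ltngtP a b) => //= e.
by move/val_inj: e ab => ->; rewrite eqxx.
Qed.

Lemma lexlt_catl (s a b : word) : lexlt (s ++ a) (s ++ b) = lexlt a b.
Proof. by elim: s => //= x s ->; rewrite ltnn eqxx. Qed.

Lemma lexlt_cases (a b : word) : lexlt a b ->
  (exists z, z != [::] /\ b = a ++ z) \/ (forall x y, lexlt (a ++ x) (b ++ y)).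
Proof.
elim: a b => [|x a IH] [|y b] //=.
- by move=> _; left; exists (y :: b).
case/orP=> [xy|/andP[/eqP<- ab]].
- by right=> ? ?; rewrite xy.
- case: (IH _ ab) => [[z [z0 ->]]|H].
  + by left; exists z.
  + by right=> u v; rewrite ltnn eqxx H.
Qed.

Lemma lexlt_same (a b x y : word) : size a = size b ->
  lexlt (a ++ x) (b ++ y) -> lexlt a b || (a == b).
Proof.
elim: a b => [|c a IH] [|d b] //= [] sab.
case/orP=> [->//|/andP[/eqP<- H]].
rewrite eqseq_cons ltnn eqxx /=; exact: IH H.
Qed.

Lemma cat_neq_r (t v : word) : t != [::] -> t ++ v != v.
Proof.
case: t => // a t _; apply/eqP=> /(congr1 size) /=; rewrite size_cat.
by move=> h; have := leqnn (size v); rewrite -{1}h ltnNge leq_addl.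
Qed.

Lemma cat_neq_l (t v : word) : t != [::] -> v ++ t != v.
Proof.
move=> t0; apply/eqP=> /(congr1 size); rewrite size_cat.
by case: t t0 => // a t _ /= h; have := leqnn (size v); rewrite -{1}h addnS ltnNge leq_addr.
Qed.

Definition sufLyn (w : word) := w != [::] /\
  forall r s, r != [::] -> s != [::] -> w = r ++ s -> lexlt w s.

Lemma lyn_suf (w : word) : lyndon w -> sufLyn w.
Proof.
case=> w0 H; split=> // r s r0 s0 wrs.
have hrot : forall u1 u2, u1 != [::] -> u2 != [::] -> w = u1 ++ u2 -> lexlt w (u2 ++ u1).
  case: H => [sw|H2]; last exact: H2. move=> u1 u2 u10 u20 e.
  move: sw; rewrite e size_cat => h; exfalso; move: h; case: u1 u10 {e} => // ? ? _; case: u2 u20 => // ? ? _ /=; lia.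
have H1 := hrot _ _ r0 s0 wrs.
have ws : w != s.
  apply/eqP=> e; move: (congr1 size wrs); rewrite -e size_cat.
  by case: r r0 {wrs H1} => // ? ? _ /=; lia.
case/orP: (lexlt_total ws) => // sw; exfalso.
case: (lexlt_cases sw) => [[z [z0 wsz]]|Hc].
- have H2 := hrot _ _ s0 z0 wsz.
  have szr : size r = size z.
    have e : s ++ z = r ++ s by rewrite -wsz -wrs.
    by move: (congr1 size e); rewrite !size_cat [size r + _]addnC => /addnI.
  move: H2; rewrite {1}wrs => /(lexlt_same szr) /orP[rz|/eqP rz].
  + by move: H1; rewrite {1}wsz lexlt_catl => /lexlt_asym; apply.
  + by subst z; move: H1; rewrite {1}wsz lexlt_catl lexlt_irr.
- by have := Hc r [::]; rewrite cats0 => /lexlt_asym; apply.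
Qed.

Lemma suf_lyn (w : word) : sufLyn w -> lyndon w.
Proof.
case=> w0 H; split=> //; right=> u1 u2 u10 u20 e.
have := H _ _ u10 u20 e.
case/lexlt_cases => [[z [z0 ez]]|Hc].
- exfalso; move: (congr1 size e) (congr1 size ez); rewrite !size_cat.
  by case: u1 u10 {e} => // ? ? _; case: z z0 {ez} => // ? ? _ /=; lia.
- by have := Hc [::] u1; rewrite cats0.
Qed.

Lemma min_exists (S : seq word) : S != [::] ->
  exists2 m, m \in S & forall x, x \in S -> (x == m) || lexlt m x.
Proof.
elim: S => // a S IH _.
case: S IH => [|b S] IH.
  by exists a; rewrite ?inE // => x; rewrite inE => /eqP->; rewrite eqxx.
case: IH => // m mS Hm.
case: (eqVneq a m) => [eam|am].
  subst m.
  by exists a; rewrite ?inE ?eqxx // => x; rewrite inE => /orP[->//|/Hm].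
case/orP: (lexlt_total am) => [lam|lma].
- exists a; first by rewrite inE eqxx.
  move=> x; rewrite inE => /orP[->//|/Hm/orP[/eqP->|mx]]; first by rewrite lam orbT.
  by rewrite (lexlt_trans lam mx) orbT.
- exists m; first by rewrite inE mS orbT.
  by move=> x; rewrite inE => /orP[/eqP->|/Hm]; rewrite ?lma ?orbT.
Qed.

Lemma lyn_fact (w : word) : sufLyn w -> (1 < size w)%N ->
  exists u v, [/\ w = u ++ v, sufLyn u & sufLyn v].
Proof.
move=> [w0 Hw] sw.
pose S := [seq drop k w | k <- iota 1 (size w).-1].
have memS : forall r x, r != [::] -> x != [::] -> w = r ++ x -> x \in S.
  move=> r x r0 x0 e; apply/mapP; exists (size r).
    rewrite mem_iota; move: (congr1 size e); rewrite size_cat.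
    by case: r r0 {e} => // ? ? _; case: x x0 => // ? ? _ /=; lia.
  by rewrite e drop_size_cat.
have S0 : S != [::] by rewrite /S; case: (size w) sw => [|[|k]].
case: (min_exists S0) => v /mapP[k]; rewrite mem_iota => kr ev Hv.
have k1 : (1 <= k < size w)%N by lia.
exists (take k w), v; split; first by rewrite ev cat_take_drop.
- split.
    apply/eqP=> /(congr1 size); rewrite size_take; case: ifP => h /= e.
      by move: k1; rewrite e.
    by move: sw; rewrite e.
  move=> r s r0 s0 us.
  have wv : w = take k w ++ v by rewrite ev cat_take_drop.
  have H1 : lexlt (take k w ++ v) (s ++ v).
    rewrite -wv; apply: (Hw r) => //; first by move: s0; case: (s).
    by rewrite {1}wv us catA.
  have us' : take k w != s.
    apply/eqP=> e; move: (congr1 size us); rewrite -e size_cat.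
    by case: r r0 {us} => // ? ? _ /=; lia.
  case/orP: (lexlt_total us') => // su; exfalso.
  case: (lexlt_cases su) => [[t [t0 ut]]|Hc].
  + move: H1; rewrite ut -catA lexlt_catl => H1.
    have tv : t ++ v \in S.
      by apply: (memS s) => //; [case: t t0 {ut H1} | rewrite wv ut catA].
    case/orP: (Hv _ tv) => [/eqP e|].
    * by move: (cat_neq_r v t0); rewrite e eqxx.
    * by move/lexlt_asym; apply.
  + by have := Hc v v; move/lexlt_asym; apply.
- split.
    by apply/eqP=> /(congr1 size)/eqP; rewrite ev size_drop subn_eq0 leqNgt; case/andP: k1 => _ ->.
  move=> r s r0 s0 vrs.
  have sS : s \in S.
    apply: (memS (take k w ++ r)) => //; first by case: (take k w).
    by rewrite -catA -vrs ev cat_take_drop.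
  case/orP: (Hv _ sS) => // /eqP e.
  by move: (cat_neq_r s r0); rewrite -vrs e eqxx.
Qed.

End Words.

Local Open Scope ring_scope.
Section Alg.
Variables (F : fieldType) (n : nat) (p : 'I_n -> 'I_n -> F).
Local Notation word := (word n).
Local Notation tens := (tens F n).
Implicit Types (u v E A B : tens) (w x y a b : word).

Lemma coef_cat u v x : coef (u ++ v) x = coef u x + coef v x.
Proof. by rewrite /coef big_cat. Qed.
Lemma coef_nil x : coef ([::] : tens) x = 0.
Proof. by rewrite /coef big_nil. Qed.
Lemma coef_scale c u x : coef (tscale c u) x = c * coef u x.
Proof.
rewrite /coef /tscale big_map mulr_sumr; apply: eq_bigr => t _ /=.
by case: eqP; rewrite ?mulr0.
Qed.
Lemma coef_sub u v x : coef (tsub u v) x = coef u x - coef v x.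
Proof. by rewrite /tsub coef_cat coef_scale mulN1r. Qed.
Lemma coef_word w x : coef (tword F w) x = (w == x)%:R.
Proof. by rewrite /coef /tword big_seq1 /=; case: eqP. Qed.
Lemma coef_flatten (l : seq tens) x : coef (flatten l) x = \sum_(u <- l) coef u x.
Proof. by rewrite /coef big_flatten. Qed.
Lemma coef_out u x : all (fun t => t.2 != x) u -> coef u x = 0.
Proof.
move/allP=> H; rewrite /coef big1_seq // => t /andP[_ /H /negPf ->] //.
Qed.
Lemma coef_comp m u x : coef (Defs.comp m u) x = if size x == m then coef u x else 0.
Proof.
rewrite /coef /Defs.comp big_filter; case: ifP => hx.
  rewrite big_mkcond; apply: eq_bigr => t _; case: (eqVneq t.2 x) => [->|ne].
    by rewrite hx.
  by case: ifP.
by rewrite big1 // => t /eqP ht; case: eqP => // e; rewrite -e ht eqxx in hx.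
Qed.
Lemma coef_sym u x : coef (sym p u) x = \sum_(t <- u) t.1 * coef (symw p t.2) x.
Proof. by rewrite /sym coef_flatten big_map; apply: eq_bigr => t _; exact: coef_scale. Qed.

Lemma regroup u (s : seq word) (f : word -> F) : uniq s ->
  {subset [seq t.2 | t <- u] <= s} ->
  \sum_(t <- u) t.1 * f t.2 = \sum_(y <- s) coef u y * f y.
Proof.
move=> us sub.
under [RHS]eq_bigr do rewrite /coef mulr_suml.
rewrite exchange_big /=.
apply: eq_big_seq => t tu.
rewrite (bigD1_seq t.2) //=; last by apply: sub; apply: map_f.
rewrite eqxx big1 ?addr0 // => y ne.
by rewrite eq_sym (negPf ne) mul0r.
Qed.

Lemma sub_l (a b : tens) : {subset [seq t.2 | t <- a] <= undup [seq t.2 | t <- a ++ b]}.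
Proof. by move=> y ya; rewrite mem_undup map_cat mem_cat ya. Qed.
Lemma sub_r (a b : tens) : {subset [seq t.2 | t <- b] <= undup [seq t.2 | t <- a ++ b]}.
Proof. by move=> y ya; rewrite mem_undup map_cat mem_cat ya orbT. Qed.

Lemma inI_lin u v c : (forall x, coef v x = c * coef u x) -> inI p u -> inI p v.
Proof.
move=> H Hu m; have := Hu m.
have Hc : forall x, coef (Defs.comp m v) x = c * coef (Defs.comp m u) x.
  by move=> x; rewrite !coef_comp H; case: ifP; rewrite ?mulr0.
case: ifP => _ Hz x.
  by rewrite Hc Hz mulr0.
pose s := undup [seq t.2 | t <- Defs.comp m u ++ Defs.comp m v].
rewrite coef_sym (@regroup _ s (fun y => coef (symw p y) x)) ?undup_uniq //;
  last exact: sub_r.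
under eq_bigr do rewrite Hc -mulrA.
rewrite -mulr_sumr -(@regroup _ s (fun y => coef (symw p y) x)) ?undup_uniq //;
  last exact: sub_l.
by rewrite -coef_sym Hz mulr0.
Qed.

Lemma inI_nil : inI p ([::] : tens).
Proof. by move=> m; case: ifP => _ x; rewrite /Defs.comp /sym /= coef_nil. Qed.

Lemma inI_comp m0 u : inI p u -> inI p (Defs.comp m0 u).
Proof.
move=> Hu m.
have E : Defs.comp m (Defs.comp m0 u) = if m == m0 then Defs.comp m u else [::].
  rewrite /Defs.comp -filter_predI; case: eqP => [->|ne].
    by apply: eq_filter => t /=; rewrite andbb.
  rewrite -(filter_pred0 u); apply: eq_filter => t /=.
  by apply/negP => /andP[/eqP a /eqP b]; apply: ne; rewrite -a b.
rewrite E; case: eqP => [->|_]; first exact: Hu.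
exact: inI_nil.
Qed.

Definition ge w := fun t : F * word => perm_eq t.2 w && ((t.2 == w) || lexlt w t.2).
Definition good E w := all (ge w) E /\ coef E w != 0.

Lemma mul_words A B a b : all (ge a) A -> all (ge b) B -> all (ge (a ++ b)) (tmul A B).
Proof.
move=> /allP HA /allP HB; apply/allP => t /allpairsP[[x y] [xA yB ->]] /=.
case/andP: (HA _ xA) => px ox; case/andP: (HB _ yB) => py oy.
rewrite /ge /= perm_cat //=.
have sz : size x.2 = size a := perm_size px.
case/orP: ox => [/eqP ->|ax].
  case/orP: oy => [/eqP ->|lby]; first by rewrite eqxx.
  by rewrite lexlt_catl lby orbT.
case: (lexlt_cases ax) => [[z [z0 ez]]|Hc]; last by rewrite Hc orbT.
exfalso; move: sz; rewrite ez size_cat; case: z z0 {ez} => // ? z _ /=.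
by move=> h; have := leqnn (size a); rewrite -{1}h addnS ltnNge leq_addr.
Qed.

Lemma coef_mul A B a b : all (fun t => size t.2 == size a) A ->
  coef (tmul A B) (a ++ b) = coef A a * coef B b.
Proof.
move=> /allP HA; rewrite /coef /tmul big_allpairs_dep /= mulr_suml.
apply: eq_big_seq => x xA; rewrite mulr_sumr; apply: eq_bigr => y _ /=.
rewrite eqseq_cat; last exact/eqP/HA.
by case: eqP => _; case: eqP => _ /=; rewrite ?mulr0 ?mul0r.
Qed.

Lemma good_node A B a b c1 c2 : good A a -> good B b -> lexlt (a ++ b) (b ++ a) ->
  c1 != 0 -> good (tsub (tscale c1 (tmul A B)) (tscale c2 (tmul B A))) (a ++ b).
Proof.
move=> [HA cA] [HB cB] lt c10.
have HBA : all (fun t => ge (a ++ b) t && lexlt (a ++ b) t.2) (tmul B A).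
  apply/allP => t tin; have /andP[pt ot] := allP (mul_words HB HA) t tin.
  have l2 : lexlt (a ++ b) t.2.
    by case/orP: ot => [/eqP->//|h]; exact: lexlt_trans lt h.
  apply/andP; split => //; rewrite /ge l2 orbT andbT.
  by rewrite perm_sym perm_catC perm_sym.
split.
  rewrite /tsub /tscale all_cat !all_map; apply/andP; split.
    by apply/allP => t tin; exact: (allP (mul_words HA HB)) t tin.
  by apply/allP => t tin /=; case/andP: (allP HBA t tin).
rewrite coef_sub !coef_scale coef_mul; last first.
  by apply/allP => t /(allP HA) /andP[pt _]; rewrite (perm_size pt).
rewrite (@coef_out (tmul B A)) ?mulr0 ?subr0 ?mulf_neq0 //.
apply/allP => t /(allP HBA) /andP[_ h]; apply/eqP => e; move: h.
by rewrite e lexlt_irr.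
Qed.

End Alg.

Section Main.
Variables (F : fieldType) (n : nat) (p : 'I_n -> 'I_n -> F).
Hypothesis hp : forall i j, p i j != 0.
Local Notation word := (word n).
Local Notation tens := (tens F n).

Lemma pdeg_neq0 d e : pdeg p d e != 0.
Proof.
apply/prodf_neq0 => i _; apply/prodf_neq0 => j _; exact: expf_neq0.
Qed.

Section Ev.
Variable ev : btree n -> tens.
Hypothesis Hl : forall i, ev (BLeaf i) = tword F [:: i].
Hypothesis Hn : forall a b, exists c1 c2, c1 != 0 /\
  ev (BNode a b) = tsub (tscale c1 (tmul (ev a) (ev b))) (tscale c2 (tmul (ev b) (ev a))).

Lemma tree_good w : sufLyn w -> exists t, good (ev t) w.
Proof.
have [k] := ubnP (size w); elim: k w => // k IH w; rewrite ltnS => sw Hw.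
case: (ltnP 1 (size w)) => [s2|s1].
  case: (lyn_fact Hw s2) => u [v [e Hu Hv]].
  have u0 : (0 < size u)%N by case: Hu; case: (u).
  have v0 : (0 < size v)%N by case: Hv; case: (v).
  have esz : size w = (size u + size v)%N by rewrite e size_cat.
  case: (IH u) => //; first by apply: leq_trans sw; rewrite esz -addn1 leq_add2l.
  move=> tu gu.
  case: (IH v) => //; first by apply: leq_trans sw; rewrite esz -add1n leq_add2r.
  move=> tv gv.
  case: (Hn tu tv) => c1 [c2 [c10 Ee]].
  exists (BNode tu tv); rewrite Ee e; apply: good_node => //.
  case: (suf_lyn Hw) => _ [sz1|hrot]; first by move: s2; rewrite sz1.
  rewrite -e; apply: hrot => //; [by case: Hu | by case: Hv].
case: w Hw sw s1 => [[]//|i [|//]] _ _ _.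
exists (BLeaf i); rewrite Hl; split.
  by rewrite /= /ge /= perm_refl eqxx.
by rewrite coef_word eqxx oner_neq0.
Qed.

End Ev.

Lemma good_notI E w : good E w -> inI p E -> ~ standard p w.
Proof.
move=> [HE cE] IE; apply.
exists (tscale (- (coef E w)^-1) [seq t <- E | t.2 != w]); split.
  rewrite /tscale all_map; apply/allP => t; rewrite mem_filter => /andP[tw tE] /=.
  case/andP: (allP HE _ tE) => pt /orP[/eqP e|->]; first by rewrite e eqxx in tw.
  rewrite /=; apply/eqP/ffunP => i; rewrite !ffunE.
  by move/seq.permP: pt => ->.
apply: (@inI_lin _ _ _ E _ (coef E w)^-1) IE => x.
rewrite coef_sub coef_word coef_scale.
case: (eqVneq w x) => [<-|wx].
  have z : coef [seq t <- E | t.2 != w] w = 0.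
    by rewrite /coef big_filter big1 // => t /negPf ->.
  by rewrite z mulr0 subr0 mulVf.
rewrite (_ : false%:R = 0) // sub0r mulNr opprK; congr (_ * _).
rewrite /coef big_filter big_mkcond; apply: eq_bigr => t _.
case: (eqVneq t.2 x) => [->|ne]; first by rewrite eq_sym wx.
by case: ifP.
Qed.

Lemma long_words : ~ Delta_finite p -> forall L, exists w, [/\ lyndon w, standard p w & (L < size w)%N].
Proof.
move=> ND L; case: (classic (exists w, [/\ lyndon w, standard p w & (L < size w)%N])) => // H.
exfalso; apply: ND.
pose S := [seq [ffun i => ((f i : nat)%:Z)] | f : {ffun 'I_n -> 'I_L.+1} <- enum {ffun 'I_n -> 'I_L.+1}].
exists (S ++ [seq [ffun i => - d i] | d : {ffun 'I_n -> int} <- S]).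
have small : forall w, lyndon w -> standard p w -> [ffun i => (wdeg w i)%:Z] \in S.
  move=> w lw sw; have sw' : (size w <= L)%N.
    by case: (leqP (size w) L) => // h; exfalso; apply: H; exists w.
  apply/mapP; exists [ffun i => inord (wdeg w i)]; first by rewrite mem_enum.
  apply/ffunP => i; rewrite !ffunE inordK // ltnS.
  exact: leq_trans (count_size _ _) sw'.
move=> d [[w [lw sw ->]]|[w [lw sw e]]]; rewrite mem_cat.
  by rewrite small.
apply/orP; right; apply/mapP; exists [ffun i => (wdeg w i)%:Z]; first exact: small.
by apply/ffunP => i; rewrite -e !ffunE opprK.
Qed.

Lemma leq_sumn (s : seq nat) x : x \in s -> (x <= sumn s)%N.
Proof.
elim: s => //= a s IH; rewrite inE => /orP[/eqP->|/IH h]; first exact: leq_addr.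
exact: leq_trans h (leq_addl _ _).
Qed.

Lemma lie_inf ev : (forall i, ev (BLeaf i) = tword F [:: i]) ->
  (forall a b, exists c1 c2, c1 != 0 /\
   ev (BNode a b) = tsub (tscale c1 (tmul (ev a) (ev b))) (tscale c2 (tmul (ev b) (ev a)))) ->
  ~ Delta_finite p -> lie_infinite_dim p ev.
Proof.
move=> Hl Hn ND N.
have elements : forall L, exists u m, [/\ inLie p ev u, all (fun t => size t.2 == m) u,
    ~ inI p u & (L < m)%N].
  move=> L; case: (long_words ND L) => w [lw sw Lw].
  case: (tree_good Hl Hn (lyn_suf lw)) => t [gt ct].
  exists (ev t), (size w); split => //.
  - exists [:: (1, t)]; apply: (@inI_lin _ _ p [::] _ 0 _ (@inI_nil _ _ p)) => x.
    by rewrite mul0r coef_sub /lincomb /= cats0 coef_scale mul1r subrr.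
  - apply/allP => x xt; have /andP[px _] := allP gt x xt; by rewrite (perm_size px).
  - by move=> I; exact: (good_notI (conj gt ct) I sw).
have : exists s : seq (tens * nat), [/\ size s = N,
    all (fun um => all (fun t => size t.2 == um.2) um.1) s,
    forall um, um \in s -> inLie p ev um.1 /\ ~ inI p um.1 & uniq (map snd s)].
  elim: N => [|N [s [ss sa sP su]]]; first by exists [::].
  case: (elements (sumn (map snd s))) => u [m [uL ua uI lm]].
  exists ((u, m) :: s); split => /=; first by rewrite ss.
  - by rewrite ua sa.
  - by move=> um; rewrite inE => /orP[/eqP->|/sP//].
  - rewrite su andbT; apply/negP => /leq_sumn h.
    by move: lm; rewrite ltnNge h.
case=> s [ss sa sP su].
pose us := fun k : 'I_N => (nth ([::], 0%N) s k).1.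
have allk : forall j : 'I_N, all (fun t => size t.2 == (nth ([::], 0%N) s j).2) (us j).
  by move=> j; apply: (allP sa); apply: mem_nth; rewrite ss.
exists us; split.
  by move=> k; apply: (proj1 (sP _ _)); apply: mem_nth; rewrite ss.
move=> c Hc k.
set m := (nth ([::], 0%N) s k).2.
have IC := inI_comp m Hc.
case: (eqVneq (c k) 0) => // ck; exfalso.
apply: (proj2 (sP (nth ([::], 0%N) s k) _)); first by apply: mem_nth; rewrite ss.
apply: (@inI_lin _ _ _ _ _ (c k)^-1) IC => x.
rewrite coef_comp coef_flatten big_map big_enum /=.
case: (eqVneq (size x) m) => [exm|nxm].
  rewrite (bigD1 k) //= big1 ?addr0 ?coef_scale ?mulKf //.
  move=> j jk; rewrite coef_scale coef_out ?mulr0 //.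
  apply/allP => t tj; have := allP (allk j) t tj; apply: contraTneq => ->.
  rewrite exm /m eq_sym.
  have := nth_uniq 0%N (_ : (j < size (map snd s))%N) (_ : (k < size (map snd s))%N) su.
  rewrite !(nth_map ([::], 0%N)) ?ss //= => ->.
  by apply/eqP => h; move/eqP: jk; apply; apply: val_inj.
  1,2: by rewrite size_map ss.
rewrite mulr0 coef_out //; apply/allP => t tk.
have := allP (allk k) t tk; apply: contraTneq => ->; exact: nxm.
Qed.

End Main.

Unset Implicit Arguments.

Theorem theorem6p4 (F : fieldType) (n : nat) (p : 'I_n -> 'I_n -> F) :
  [pchar F] =i pred0 ->
  (forall i j, p i j != 0) ->
  ~ Delta_finite p ->
  lie_infinite_dim p (bevalL p) /\ lie_infinite_dim p (bevalR p).
Proof.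
move=> _ hp ND; split; apply: lie_inf => // a b.
- exists (pdeg p (bdeg b) (bdeg a)), (pdeg p (bdeg a) (bdeg b)).
  by split; [exact: pdeg_neq0 | reflexivity].
- exists (pdeg p (bdeg a) (bdeg b)), (pdeg p (bdeg b) (bdeg a)).
  by split; [exact: pdeg_neq0 | reflexivity].
Qed.
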